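(* Let $I$ be a nonzero ideal of $\mathbb{Z}[\sqrt{2}]$. Then there exists a generator $\alpha'$ of $I$ (i.e. $I=(\alpha')$) which is a shortest nonzero vector of $I$ under the canonical embedding, i.e. $\|\Sigma_{\mathbb{Q}(\sqrt2)}(\alpha')\|\le\|\Sigma_{\mathbb{Q}(\sqrt2)}(\gamma)\|$ for every nonzero $\gamma\in I$.
   Context: The canonical embedding of $\mathbb{Q}(\sqrt2)$ is $\Sigma_{\mathbb{Q}(\sqrt2)}(x)=(x,\tau(x))$, where $\tau$ is the nontrivial automorphism ($\tau(\sqrt2)=-\sqrt2$), with $\|\Sigma_{\mathbb{Q}(\sqrt2)}(x)\|^2=x^2+\tau(x)^2$. *)

(* Defs.v *)
From Stdlib Require Import Reals ZArith.
Open Scope R_scope.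

(* The element  a + b*sqrt 2  of Z[sqrt 2] is represented by (a, b). *)
Record zsqrt2 : Type := mkZS { zs_a : Z; zs_b : Z }.

Definition zs0 : zsqrt2 := mkZS 0 0.
Definition zs_add (x y : zsqrt2) : zsqrt2 :=
  mkZS (zs_a x + zs_a y)%Z (zs_b x + zs_b y)%Z.
Definition zs_mul (x y : zsqrt2) : zsqrt2 :=
  mkZS (zs_a x * zs_a y + 2 * zs_b x * zs_b y)%Z
       (zs_a x * zs_b y + zs_b x * zs_a y)%Z.

Definition is_ideal (I : zsqrt2 -> Prop) : Prop :=
  I zs0 /\
  (forall x y, I x -> I y -> I (zs_add x y)) /\
  (forall r x, I x -> I (zs_mul r x)).

Definition generates (g : zsqrt2) (I : zsqrt2 -> Prop) : Prop :=
  forall x, I x <-> exists r, x = zs_mul r g.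

(* The two real embeddings: identity and tau (sqrt 2 |-> - sqrt 2). *)
Definition emb_id (x : zsqrt2) : R := IZR (zs_a x) + IZR (zs_b x) * sqrt 2.
Definition emb_tau (x : zsqrt2) : R := IZR (zs_a x) - IZR (zs_b x) * sqrt 2.

Definition Sigma_norm (x : zsqrt2) : R :=
  sqrt (emb_id x ^ 2 + emb_tau x ^ 2).

(* Main.v *)
Require Import Defs.
From Stdlib Require Import Reals ZArith.
From Stdlib Require Import Lia Lra Classical Arith Wf_nat.
Open Scope R_scope.

Definition Qf (y : zsqrt2) : Z := (zs_a y * zs_a y + 2 * zs_b y * zs_b y)%Z.
Definition Nm (y : zsqrt2) : Z := (zs_a y * zs_a y - 2 * zs_b y * zs_b y)%Z.

Lemma Nm_mul x y : Nm (zs_mul x y) = (Nm x * Nm y)%Z.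
Proof. destruct x as [a1 b1], y as [a2 b2]; unfold Nm, zs_mul; cbn [zs_a zs_b]; ring. Qed.

Lemma key (A B : Z) : (0 <= A -> 0 <= B -> (A <> 0 \/ B <> 0) ->
  A*A + 2*B*B >= 2 * Z.abs (A*A - 2*B*B) -> A*A + 2*B*B < 4*A*B)%Z.
Proof.
intros HA HB Hn H.
destruct (Z_le_gt_dec (2*B*B) (A*A)) as [H1|H1].
- rewrite Z.abs_eq in H by lia.
  assert (B <= A)%Z by nia. assert (A <= 3*B)%Z by nia.
  assert (B <> 0)%Z by nia. nia.
- rewrite Z.abs_neq in H by lia.
  assert (2*B <= 3*A)%Z by nia. assert (A <= 2*B)%Z by nia.
  assert (B <> 0)%Z by nia. nia.
Qed.

Lemma odd_sq k b : ((2*k+1)*(2*k+1) <> 2*b*b)%Z.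
Proof. intro H. ring_simplify in H. lia. Qed.

Lemma irr_aux : forall n a b, (Z.abs_nat a < n)%nat -> (a*a = 2*b*b)%Z -> a = 0%Z.
Proof.
induction n; intros a b Hn H. lia.
destruct (Z.Even_or_Odd a) as [[k Hk]|[k Hk]].
- subst a. destruct (Z.Even_or_Odd b) as [[j Hj]|[j Hj]].
  + subst b. assert (Hk2 : (k*k = 2*j*j)%Z) by nia.
    destruct (Z.eq_dec k 0). subst; lia.
    assert (k = 0%Z). apply (IHn k j). lia. exact Hk2. lia.
  + subst b. exfalso. apply (odd_sq j k). nia.
- subst a. exfalso. apply (odd_sq k b). exact H.
Qed.

Lemma Nm0 y : Nm y = 0%Z -> y = zs0.
Proof.
destruct y as [a b]; unfold Nm; cbn [zs_a zs_b]; intro H.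
assert (a = 0%Z) by (apply (irr_aux (S (Z.abs_nat a)) a b); lia).
subst. assert (b = 0%Z) by nia. subst. reflexivity.
Qed.

Lemma Nm_zs0 : Nm zs0 = 0%Z.
Proof. reflexivity. Qed.

Lemma min_exists (P : zsqrt2 -> Prop) (f : zsqrt2 -> Z) :
  (forall y, P y -> (0 <= f y)%Z) -> (exists y, P y) ->
  exists y, P y /\ forall z, P z -> (f y <= f z)%Z.
Proof.
intros Hpos [y0 Hy0].
apply NNPP; intro Hno.
assert (Hall : forall n y, Z.to_nat (f y) = n -> ~ P y).
{ intro n; induction n as [n IH] using lt_wf_ind; intros y Hy Py.
  apply Hno. exists y. split; auto. intros z Pz.
  apply NNPP; intro Hlt.
  apply (IH (Z.to_nat (f z))) with z; auto.
  pose proof (Hpos z Pz); pose proof (Hpos y Py). lia. }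
exact (Hall _ y0 eq_refl Hy0).
Qed.

Lemma round_ex p n : (n <> 0 -> exists m, 2 * Z.abs (p - m*n) <= Z.abs n)%Z.
Proof.
intro Hn.
pose proof (Z.div_mod p n Hn).
destruct (Z_lt_le_dec 0 n).
- pose proof (Z.mod_pos_bound p n l).
  destruct (Z_le_gt_dec (2 * (p mod n)) n).
  + exists (p / n)%Z. lia.
  + exists (p / n + 1)%Z. nia.
- assert (n < 0)%Z by lia.
  pose proof (Z.mod_neg_bound p n H0).
  destruct (Z_le_gt_dec (2 * - (p mod n)) (-n)).
  + exists (p / n)%Z. lia.
  + exists (p / n + 1)%Z. nia.
Qed.

Lemma euclid g x : Nm g <> 0%Z -> exists q,
  (Z.abs (Nm (zs_add x (zs_mul (mkZS (- zs_a q) (- zs_b q)) g))) < Z.abs (Nm g))%Z.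
Proof.
intro Hn. destruct g as [a b], x as [c d].
set (n := Nm (mkZS a b)) in *.
destruct (round_ex (c*a - 2*d*b) n Hn) as [m Hm].
destruct (round_ex (d*a - c*b) n Hn) as [k Hk].
exists (mkZS m k). cbn [zs_a zs_b].
set (e := (c*a - 2*d*b - m*n)%Z) in *.
set (f := (d*a - c*b - k*n)%Z) in *.
set (R := Nm (zs_add {| zs_a := c; zs_b := d |} (zs_mul {| zs_a := - m; zs_b := - k |} {| zs_a := a; zs_b := b |}))).
assert (HR : (R * n = e*e - 2*f*f)%Z) by (unfold R, e, f, n, Nm, zs_add, zs_mul; cbn [zs_a zs_b]; ring).
assert (4*e*e <= n*n)%Z by nia.
assert (4*f*f <= n*n)%Z by nia.
pose proof (Z.square_nonneg e). pose proof (Z.square_nonneg f).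
assert (0 < n*n)%Z by (pose proof (Z.square_nonneg n); assert (n*n <> 0)%Z by (apply Z.neq_mul_0; auto); lia).
assert (Z.abs (R*n) < n*n)%Z.
{ rewrite HR. apply Z.abs_lt. lia. }
rewrite Z.abs_mul in H4.
assert (n*n = Z.abs n * Z.abs n)%Z by (rewrite Z.abs_square; ring).
rewrite H5 in H4.
apply (Z.mul_lt_mono_pos_r (Z.abs n)); lia.
Qed.

Lemma gen_lemma I g : is_ideal I -> I g -> g <> zs0 ->
  (forall z, I z -> z <> zs0 -> (Z.abs (Nm g) <= Z.abs (Nm z))%Z) -> generates g I.
Proof.
intros [H0 [Hadd Hmul]] Ig Hg Hmin x; split.
- intro Ix.
  assert (Hn : Nm g <> 0%Z) by (intro E; apply Hg, Nm0, E).
  destruct (euclid g x Hn) as [q Hq].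
  set (r := zs_add x (zs_mul (mkZS (- zs_a q) (- zs_b q)) g)) in *.
  assert (Ir : I r) by (apply Hadd; auto).
  assert (r = zs0).
  { apply NNPP; intro Hr. specialize (Hmin r Ir Hr). lia. }
  exists q. unfold r in H. destruct x as [x1 x2], q as [q1 q2], g as [g1 g2]; unfold zs_add, zs_mul, zs0 in *; cbn [zs_a zs_b] in *.
  pose proof (f_equal zs_a H) as E1; pose proof (f_equal zs_b H) as E2; cbn [zs_a zs_b] in E1, E2. f_equal; lia.
- intros [r ->]. apply Hmul, Ig.
Qed.

Lemma Q_ge_N y : (Z.abs (Nm y) <= Qf y)%Z.
Proof. unfold Nm, Qf. apply Z.abs_le. nia. Qed.

Lemma descent I y : is_ideal I -> I y -> y <> zs0 ->
  exists y', I y' /\ y' <> zs0 /\ Z.abs (Nm y') = Z.abs (Nm y) /\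
    (Qf y' < 2 * Z.abs (Nm y'))%Z.
Proof.
intros HI Iy Hy. pose proof HI as [H0 [Hadd Hmul]].
destruct (min_exists (fun z => I z /\ z <> zs0 /\ Z.abs (Nm z) = Z.abs (Nm y)) Qf)
  as [y' [[Iy' [Hy' Hn']] Hmin]].
{ intros z _; unfold Qf; nia. }
{ exists y; auto. }
exists y'; repeat split; auto.
apply Z.nle_gt; intro Hc.
assert (Hnz : Nm y' <> 0%Z) by (intro E; apply Hy', Nm0, E).
destruct y' as [a b].
assert (Hc' : (2 * Z.abs (a*a - 2*b*b) <= a*a + 2*b*b)%Z) by (unfold Qf, Nm in Hc; cbn [zs_a zs_b] in Hc; lia).
assert (Hnz' : (a*a - 2*b*b <> 0)%Z) by (unfold Nm in Hnz; cbn [zs_a zs_b] in Hnz; lia).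
pose proof (Z.abs_square a) as Sa. pose proof (Z.abs_square b) as Sb.
assert (Hk : (Z.abs a * Z.abs a + 2 * Z.abs b * Z.abs b < 4 * Z.abs a * Z.abs b)%Z).
{ apply key. apply Z.abs_nonneg. apply Z.abs_nonneg.
  destruct (Z.eq_dec a 0) as [->|Ha]; [right; intro Hb; apply Z.abs_0_iff in Hb; subst; lia | left; lia].
  replace (Z.abs a * Z.abs a - 2 * Z.abs b * Z.abs b)%Z with (a*a-2*b*b)%Z by lia. lia. }
assert (Hk2 : (a*a + 2*b*b < 4 * Z.abs (a*b))%Z) by (rewrite Z.abs_mul; lia).
assert (HNu : forall u, Nm u = (-1)%Z -> I (zs_mul u (mkZS a b)) /\ zs_mul u (mkZS a b) <> zs0 /\ Z.abs (Nm (zs_mul u (mkZS a b))) = Z.abs (Nm y)).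
{ intros u Hu. split; [apply Hmul; auto|]. split.
  - intro E. pose proof (f_equal Nm E) as E2. rewrite Nm_mul, Nm_zs0, Hu in E2. lia.
  - rewrite Nm_mul, <- Hn', Hu. lia. }
destruct (Z_le_gt_dec 0 (a*b)) as [Hab|Hab].
- rewrite Z.abs_eq in Hk2 by lia.
  specialize (Hmin _ (HNu (mkZS (-1) 1) eq_refl)).
  unfold Qf, zs_mul in Hmin; cbn [zs_a zs_b] in Hmin. lia.
- rewrite Z.abs_neq in Hk2 by lia.
  specialize (Hmin _ (HNu (mkZS 1 1) eq_refl)).
  unfold Qf, zs_mul in Hmin; cbn [zs_a zs_b] in Hmin. lia.
Qed.

Lemma Sigma_Q y : Sigma_norm y = sqrt (2 * IZR (Qf y)).
Proof.
unfold Sigma_norm, emb_id, emb_tau, Qf. f_equal.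
rewrite plus_IZR, !mult_IZR.
assert (H2 : sqrt 2 * sqrt 2 = 2) by (apply sqrt_sqrt; lra).
cbn [zs_a zs_b]. ring_simplify. rewrite <- (Rmult_1_r (sqrt 2 ^ 2)). 
replace (sqrt 2 ^ 2) with 2 by (simpl; rewrite Rmult_1_r; auto). ring.
Qed.

Theorem theorem6 (I : zsqrt2 -> Prop) :
  is_ideal I ->
  (exists x, I x /\ x <> zs0) ->
  exists g, generates g I /\
    (forall c, I c -> c <> zs0 -> Sigma_norm g <= Sigma_norm c).
Proof.
intros HI Hex. pose proof HI as [H0 [Hadd Hmul]].
destruct (min_exists (fun z => I z /\ z <> zs0) (fun z => Z.abs (Nm z)))
  as [g0 [[Ig0 Hg0] Hmin0]]; [intros; lia| exact Hex |].
assert (Hgen0 : generates g0 I) by (apply gen_lemma; auto; intros; apply Hmin0; auto).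
destruct (descent I g0 HI Ig0 Hg0) as [g1 [Ig1 [Hg1 [Hn1 HQ1]]]].
destruct (min_exists (fun z => I z /\ z <> zs0) Qf) as [h [[Ih Hh] HminQ]];
  [intros; unfold Qf; nia | exact Hex |].
assert (Hhn : Z.abs (Nm h) = Z.abs (Nm g0)).
{ destruct (proj1 (Hgen0 h) Ih) as [r Hr].
  assert (HN : Nm h = (Nm r * Nm g0)%Z) by (rewrite Hr; apply Nm_mul).
  assert (Nm h <> 0%Z) by (intro E; apply Hh, Nm0, E).
  pose proof (Q_ge_N h). pose proof (HminQ g1 (conj Ig1 Hg1)).
  assert (0 < Z.abs (Nm g0))%Z by (assert (Nm g0 <> 0%Z) by (intro E; apply Hg0, Nm0, E); lia).
  rewrite HN, Z.abs_mul in *.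
  assert (Z.abs (Nm r) <> 0%Z) by lia.
  assert (Z.abs (Nm r) = 1%Z) by nia. rewrite H5; ring. }
exists h; split.
- apply gen_lemma; auto. intros z Iz Hz. rewrite Hhn. apply Hmin0; auto.
- intros c Ic Hc. rewrite !Sigma_Q. apply sqrt_le_1_alt.
  apply Rmult_le_compat_l; [lra|]. apply IZR_le. apply HminQ; auto.
Qed.
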